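(* Let $\psi\in\mathbf{\Psi}_n$. Define $|\!|\!|\cdot|\!|\!|_\psi:X^n\to\mathbb{R}$ by $$|\!|\!|x|\!|\!|_\psi:=\Big(\sum_{i=1}^n\|x_i\|\Big)\,\psi\Big(\frac{\|x_1\|}{\sum_{i=1}^n\|x_i\|},\ldots,\frac{\|x_{n}\|}{\sum_{i=1}^n\|x_i\|}\Big)\ \text{if } x\ne0_{X^n},\qquad |\!|\!|0_{X^n}|\!|\!|_\psi:=0,$$ for all $x:=(x_1,\ldots,x_n)\in X^n$. Then: (i) $|\!|\!|\cdot|\!|\!|_\psi \in\mathbf{N}_{X^n}$; (ii) if $\psi\in \mathbf{\Psi}^{\rm sc}_{n}$ and $\|\cdot\|$ is strictly convex, then $|\!|\!|\cdot|\!|\!|_\psi\in \mathbf{N}^{\rm sc}_{X^n}$; (iii) $\psi(s)=|\!|\!|(s_1\mathbf{u}_1,\ldots,s_{n}\mathbf{u}_n)|\!|\!|_{\psi}$ for all $(\mathbf{u}_1,\ldots,\mathbf{u}_n)\in \mathbb{S}_X\times\ldots\times\mathbb{S}_X$ and $s:=(s_1,\ldots,s_{n})\in\Omega_n$.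
   Context: Let $(X,\|\cdot\|)$ be a normed vector space, $n\ge2$, $\mathbb{S}_X$ its unit sphere. $\mathbf{N}_{X^n}$ is the family of norms $|\!|\!|\cdot|\!|\!|$ on $X^n$ satisfying (A1) $|\!|\!|(x_1,\ldots,x_n)|\!|\!|=|\!|\!|(\pm x_1,\ldots,\pm x_n)|\!|\!|$ for all $x\in X^n$ and all sign choices, and (A2) $|\!|\!|(0_X,\ldots,0_X,v,0_X,\ldots,0_X)|\!|\!|=\|v\|$ for all $v\in X$ in any $i$th position. $\mathbf{N}^{\rm sc}_{X^n}$ is its subclass of strictly convex norms. $\Omega_n:=\{t\in\mathbb{R}^n\mid t_i\ge0,\ \sum_i t_i=1\}$, $\Omega_n^\circ:=\{t\in\Omega_n\mid t_i<1\ \forall i\}$. $\mathbf{\Psi}_n$ is the class of convex continuous $\psi:\Omega_n\to\mathbb{R}$ with (B1) $\psi(\mathbf{e}_i)=1$ for all standard unit vectors $\mathbf{e}_i$ and (B2) $\psi(t)\ge(1-t_i)\psi\big(\frac{t_1}{1-t_i},\ldots,\frac{t_{i-1}}{1-t_i},0,\frac{t_{i+1}}{1-t_i},\ldots,\frac{t_n}{1-t_i}\big)$ for all $t\in\Omega_n^\circ$, $i=1,\ldots,n$; $\mathbf{\Psi}^{\rm sc}_n$ is its subclass of strictly convex functions. *)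

(* Defs.v *)
From HB Require Import structures.
From mathcomp Require Import all_boot all_order all_algebra.
From mathcomp Require Import all_classical all_reals all_analysis.
Set Implicit Arguments. Unset Strict Implicit. Unset Printing Implicit Defensive.
Import Order.TTheory GRing.Theory Num.Theory.
Import numFieldNormedType.Exports.
Local Open Scope classical_set_scope.
Local Open Scope ring_scope.

Section Defs.
Variables (R : realType) (X : normedModType R) (n : nat).

(* X^n is represented as functions 'I_n -> X with pointwise operations. *)
Definition vadd (x y : 'I_n -> X) : 'I_n -> X := fun i => x i + y i.
Definition vscale (a : R) (x : 'I_n -> X) : 'I_n -> X := fun i => a *: x i.
Definition vzero : 'I_n -> X := fun _ => 0.

Definition is_norm (N : ('I_n -> X) -> R) : Prop :=
  [/\ forall x, 0 <= N x,
      forall x, N x = 0 -> x = vzero,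
      forall a x, N (vscale a x) = `|a| * N x
    & forall x y, N (vadd x y) <= N x + N y].

Definition in_N (N : ('I_n -> X) -> R) : Prop :=
  [/\ is_norm N,
      (forall (x : 'I_n -> X) (eps : 'I_n -> bool),
          N (fun i => (-1) ^+ eps i *: x i) = N x)
    &
      (forall (i : 'I_n) (v : X), N (fun j => if j == i then v else 0) = `|v|)].

(* strict convexity of a norm: the unit sphere contains no nontrivial segment
   (midpoint formulation) *)
Definition strictly_convex_normX : Prop :=
  forall x y : X, `|x| = 1 -> `|y| = 1 -> x <> y -> `|(2^-1 : R) *: (x + y)| < 1.

Definition strictly_convex_norm (N : ('I_n -> X) -> R) : Prop :=
  forall x y, N x = 1 -> N y = 1 -> x <> y -> N (vscale 2^-1 (vadd x y)) < 1.

Definition in_N_sc (N : ('I_n -> X) -> R) : Prop := in_N N /\ strictly_convex_norm N.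

End Defs.

Section Psi.
Variables (R : realType) (n : nat).

Definition Omega : set 'rV[R]_n :=
  [set t | (forall i, 0 <= t ord0 i) /\ \sum_(i < n) t ord0 i = 1].
Definition Omega_int : set 'rV[R]_n :=
  [set t | Omega t /\ forall i, t ord0 i < 1].

Definition std_e (i : 'I_n) : 'rV[R]_n := \row_j (if j == i then 1 else 0).

Definition in_Psi (psi : 'rV[R]_n -> R) : Prop :=
  [/\
      (forall s t (l : R), Omega s -> Omega t -> 0 <= l <= 1 ->
          psi (l *: s + (1 - l) *: t) <= l * psi s + (1 - l) * psi t),
      {within Omega, continuous psi},
      (forall i, psi (std_e i) = 1)
    &
      (forall t i, Omega_int t ->
         psi t >= (1 - t ord0 i) *
           psi (\row_j (if j == i then 0 else t ord0 j / (1 - t ord0 i))))].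

Definition in_Psi_sc (psi : 'rV[R]_n -> R) : Prop :=
  in_Psi psi /\
  (forall s t (l : R), Omega s -> Omega t -> s <> t -> 0 < l < 1 ->
      psi (l *: s + (1 - l) *: t) < l * psi s + (1 - l) * psi t).

End Psi.

Definition norm_psi (R : realType) (X : normedModType R) (n : nat)
  (psi : 'rV[R]_n -> R) (x : 'I_n -> X) : R :=
  if `[< x = @vzero R X n >] then 0
  else (\sum_(i < n) `|x i|) *
       psi (\row_j (`|x j| / \sum_(i < n) `|x i|)).

(* Main.v *)
Require Import Defs.
From HB Require Import structures.
From mathcomp Require Import all_boot all_order all_algebra.
From mathcomp Require Import all_classical all_reals all_analysis.
From mathcomp Require Import ring lra.
Import Order.TTheory GRing.Theory Num.Theory.
Import numFieldNormedType.Exports.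
Local Open Scope classical_set_scope.
Local Open Scope ring_scope.

Set Implicit Arguments. Unset Strict Implicit.
Section PsiF.
Variables (R : realType) (n : nat) (psi : 'rV[R]_n -> R).
Hypothesis hpsi : in_Psi psi.

Definition Ssum (a : 'I_n -> R) := \sum_(i < n) a i.
Definition nrm (a : 'I_n -> R) : 'rV[R]_n := \row_j (a j / Ssum a).
Definition FF (a : 'I_n -> R) := if 0 < Ssum a then Ssum a * psi (nrm a) else 0.
Definition nng (a : 'I_n -> R) := forall i, 0 <= a i.

Lemma S_ge0 a : nng a -> 0 <= Ssum a.
Proof. by move=> ha; apply: sumr_ge0 => i _. Qed.

Lemma S_eq0 a : nng a -> ~~ (0 < Ssum a) -> forall i, a i = 0.
Proof.
move=> ha hS i; have h0 : Ssum a = 0.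
  by apply/eqP; rewrite eq_le S_ge0 // andbT leNgt.
by apply: (psumr_eq0P _ h0).
Qed.

Lemma F0 {a} : ~~ (0 < Ssum a) -> FF a = 0.
Proof. by rewrite /FF => /negbTE ->. Qed.

Lemma FE {a} : 0 < Ssum a -> FF a = Ssum a * psi (nrm a).
Proof. by rewrite /FF => ->. Qed.

Lemma nrm_Omega a : nng a -> 0 < Ssum a -> Omega (nrm a).
Proof.
move=> ha hS; split.
  by move=> i; rewrite mxE divr_ge0 // ltW.
under eq_bigr do rewrite mxE.
by rewrite -mulr_suml mulfV // gt_eqF.
Qed.

Lemma SD p q : Ssum (fun j => p j + q j) = Ssum p + Ssum q.
Proof. by rewrite /Ssum big_split. Qed.

Lemma SZ c p : Ssum (fun j => c * p j) = c * Ssum p.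
Proof. by rewrite /Ssum mulr_sumr. Qed.

Lemma nrmZ c p : 0 < c -> nrm (fun j => c * p j) = nrm p.
Proof.
move=> hc; apply/rowP => j; rewrite !mxE SZ invfM mulrACA mulfV ?mul1r //.
by rewrite gt_eqF.
Qed.

Lemma FZ c p : 0 <= c -> FF (fun j => c * p j) = c * FF p.
Proof.
rewrite le_eqVlt => /orP [/eqP <-|hc].
  by rewrite mul0r F0 // SZ mul0r ltxx.
rewrite /FF SZ nrmZ // pmulr_rgt0 //.
by case: ifP => _; rewrite ?mulr0 ?mulrA.
Qed.

Lemma F_comb p q : nng p -> nng q -> 0 < Ssum p -> 0 < Ssum q ->
  FF (fun j => p j + q j) = (Ssum p + Ssum q) *
    psi ((Ssum p / (Ssum p + Ssum q)) *: nrm p + (1 - Ssum p / (Ssum p + Ssum q)) *: nrm q).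
Proof.
move=> hp hq hP hQ; rewrite FE SD ?addr_gt0 //; congr (_ * psi _).
apply/rowP => j; rewrite !mxE SD.
have hP0 : Ssum p != 0 by rewrite gt_eqF.
have hQ0 : Ssum q != 0 by rewrite gt_eqF.
have hPQ : Ssum p + Ssum q != 0 by rewrite gt_eqF // addr_gt0.
by field; rewrite ?hP0 ?hQ0 ?hPQ.
Qed.

Lemma nng_add p q : nng p -> nng q -> nng (fun j => p j + q j).
Proof. by move=> hp hq j; rewrite addr_ge0. Qed.

Lemma nng_scale c p : 0 <= c -> nng p -> nng (fun j => c * p j).
Proof. by move=> hc hp j; rewrite mulr_ge0. Qed.

Lemma F_sub p q : nng p -> nng q -> FF (fun j => p j + q j) <= FF p + FF q.
Proof.
move=> hp hq.
have [hP|hP] := boolP (0 < Ssum p); last first.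
  have -> : (fun j => p j + q j) = q.
    by apply: funext => j; rewrite (S_eq0 hp hP) add0r.
  by rewrite (F0 hP) add0r.
have [hQ|hQ] := boolP (0 < Ssum q); last first.
  have -> : (fun j => p j + q j) = p.
    by apply: funext => j; rewrite (S_eq0 hq hQ) addr0.
  by rewrite (F0 hQ) addr0.
case: hpsi => hconv _ _ _.
rewrite F_comb // (FE hP) (FE hQ).
set P := Ssum p; set Q := Ssum q.
have hPQ : 0 < P + Q by rewrite addr_gt0.
have hl : 0 <= P / (P + Q) <= 1.
  apply/andP; split; first by rewrite divr_ge0 // ltW.
  by rewrite ler_pdivrMr // mul1r lerDl ltW.
apply: le_trans.
  apply: ler_wpM2l; first exact: ltW.
  by apply: hconv => //; apply: nrm_Omega.
rewrite le_eqVlt; apply/orP; left; apply/eqP.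
by field; rewrite gt_eqF.
Qed.

Lemma F_conv p q l : nng p -> nng q -> 0 <= l <= 1 ->
  FF (fun j => l * p j + (1 - l) * q j) <= l * FF p + (1 - l) * FF q.
Proof.
move=> hp hq /andP [hl0 hl1].
have hl1' : 0 <= 1 - l by rewrite subr_ge0.
have := F_sub (nng_scale hl0 hp) (nng_scale hl1' hq).
by rewrite !FZ.
Qed.

Lemma F_single c i : 0 <= c -> FF (fun j => if j == i then c else 0) = c.
Proof.
move=> hc.
have hS : Ssum (fun j => if j == i then c else 0) = c.
  by rewrite /Ssum (bigD1 i) //= eqxx big1 ?addr0 // => j /negbTE ->.
move: hc hS; rewrite le_eqVlt => /orP [/eqP <-|hc] hS.
  by rewrite F0 // hS ltxx.
rewrite FE hS //.
have -> : nrm (fun j => if j == i then c else 0) = @std_e R n i.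
  apply/rowP => j; rewrite !mxE hS; case: (j == i).
    by rewrite divff // gt_eqF.
  by rewrite mul0r.
by case: hpsi => _ _ hB1 _; rewrite hB1 mulr1.
Qed.

Lemma F_B2 a i : nng a -> FF (fun j => if j == i then 0 else a j) <= FF a.
Proof.
move=> ha.
set z := fun j => if j == i then 0 else a j.
have hz : nng z by move=> j; rewrite /z; case: ifP.
have Sz : Ssum z = Ssum a - a i.
  rewrite /Ssum (bigD1 i) //= [in RHS](bigD1 i) //= /z eqxx add0r.
  rewrite [a i + _]addrC addrK; apply: eq_bigr => j /negbTE ->; done.
have [hz0|hz0] := boolP (0 < Ssum z); last first.
  rewrite (F0 hz0).
  have -> : a = fun j => if j == i then a i else 0.
    apply: funext => j; case: (eqVneq j i) => [->|h] //.
    by have := S_eq0 hz hz0 j; rewrite /z (negbTE h).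
  by rewrite F_single.
have hSa : 0 < Ssum a by rewrite (lt_le_trans hz0) // Sz lerBlDr lerDl.
have [hint|hnot] := boolP [forall j, a j < Ssum a]; last first.
  move: hnot => /forallPn [j]; rewrite -leNgt => hj.
  have hsum : \sum_(k | k != j) a k = 0.
    apply/eqP; rewrite eq_le sumr_ge0 ?andbT //.
    by move: hj; rewrite /Ssum (bigD1 j) //= gerDl.
  case: (eqVneq i j) => [eij|nij].
    by move: hz0; rewrite Sz /Ssum (bigD1 j) //= hsum addr0 eij subrr ltxx.
  have ai0 : a i = 0 by apply: (psumr_eq0P _ hsum) => // k _.
  have -> : z = a.
    by apply: funext => k; rewrite /z; case: (eqVneq k i) => [->|].
  by [].
case: hpsi => _ _ _ hB2.
have hOi : Omega_int (nrm a).
  split; first exact: nrm_Omega.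
  move=> k; rewrite mxE ltr_pdivrMr // mul1r.
  by move/forallP: hint; apply.
have hB := hB2 _ i hOi.
rewrite (FE hz0) (FE hSa).
have -> : nrm z = \row_j (if j == i then 0 else nrm a ord0 j / (1 - nrm a ord0 i)).
  apply/rowP => j; rewrite !mxE; case: (eqVneq j i) => [->|h].
    by rewrite /z ?eqxx mul0r.
  rewrite /z ?(negbTE h) Sz ?mxE.
  have h1 : Ssum a != 0 by rewrite gt_eqF.
  have h2 : Ssum a - a i != 0 by rewrite -Sz gt_eqF.
  by field; rewrite ?h1 ?h2.
rewrite Sz.
have -> : Ssum a - a i = Ssum a * (1 - nrm a ord0 i).
  rewrite mxE; have h1 : Ssum a != 0 by rewrite gt_eqF.
  by field; rewrite ?h1.
by rewrite -mulrA; apply: ler_wpM2l => //; apply: ltW.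
Qed.


Lemma F_coord p q i : nng q -> (forall j, j != i -> p j = q j) ->
  0 <= p i -> p i <= q i -> FF p <= FF q.
Proof.
move=> hq hpq hp0 hpq'.
set z := fun j => if j == i then 0 else q j.
have hz : nng z by move=> j; rewrite /z; case: ifP.
have hzq : FF z <= FF q := F_B2 i hq.
have [qi0|qi0] := boolP (0 < q i); last first.
  have pi0 : p i = q i.
    by apply/eqP; rewrite eq_le hpq' /= (le_trans _ hp0) // leNgt.
  have -> : p = q.
    by apply: funext => j; case: (eqVneq j i) => [->|h] //; apply: hpq.
  by [].
set l := p i / q i.
have hl0 : 0 <= l by rewrite divr_ge0 // ltW.
have hl1 : l <= 1 by rewrite ler_pdivrMr // mul1r.
have -> : p = fun j => l * q j + (1 - l) * z j.
  apply: funext => j; rewrite /z; case: (eqVneq j i) => [->|h].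
    by rewrite mulr0 addr0 /l divfK // gt_eqF.
  rewrite -mulrDl addrC subrK mul1r; exact: hpq.
apply: le_trans; first by apply: F_conv => //; rewrite hl0 hl1.
rewrite [X in _ <= X](_ : _ = l * FF q + (1 - l) * FF q); last by rewrite -mulrDl addrC subrK mul1r.
by rewrite lerD2l; apply: ler_wpM2l => //; rewrite subr_ge0.
Qed.

Lemma F_mono a b : nng a -> (forall i, a i <= b i) -> FF a <= FF b.
Proof.
move=> ha hab.
have hb : nng b by move=> j; apply: le_trans (ha j) (hab j).
pose c (k : nat) := fun j : 'I_n => if (j < k)%N then b j else a j.
have hc : forall k, nng (c k) by move=> k j; rewrite /c; case: ifP.
have H : forall k, FF a <= FF (c k).
  elim => [|k IH].
    have -> : c 0%N = a by apply: funext => j.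
    by [].
  apply: le_trans IH _.
  case: (ltnP k n) => hk.
    apply: (F_coord (i := Ordinal hk)) => //.
    - move=> j hj; rewrite /c.
      have -> : (j < k.+1)%N = (j < k)%N.
        rewrite ltnS leq_eqVlt.
        have -> : (nat_of_ord j == k) = false.
          by apply/negbTE; apply: contra hj => /eqP hjk; apply/eqP; apply: val_inj.
        by [].
      by [].
    - by rewrite /c /= ltnn.
    - by rewrite /c /= ltnn ltnSn.
  have -> : c k.+1 = c k.
    apply: funext => j; rewrite /c.
    have h1 : (j < k)%N by apply: leq_trans (ltn_ord j) hk.
    by rewrite h1 (ltn_trans h1 (ltnSn k)).
  by [].
have := H n.
have -> : c n = b by apply: funext => j; rewrite /c ltn_ord.
by [].
Qed.

Lemma F_ge a j : nng a -> a j <= FF a.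
Proof.
move=> ha; rewrite -[X in X <= _](F_single j (ha j)).
apply: F_mono.
  by move=> k; case: ifP.
by move=> k; case: ifP => [/eqP ->|_].
Qed.

Lemma F_ge0 a : nng a -> 0 <= FF a.
Proof.
move=> ha.
have <- : FF (fun _ => 0) = 0 by rewrite F0 // /Ssum big1 ?ltxx.
by apply: F_mono.
Qed.

Definition psi_sc := forall s t (l : R), Omega s -> Omega t -> s <> t -> 0 < l < 1 ->
      psi (l *: s + (1 - l) *: t) < l * psi s + (1 - l) * psi t.

Lemma F_sub_strict (hsc : psi_sc) p q : nng p -> nng q -> 0 < Ssum p -> 0 < Ssum q ->
  nrm p <> nrm q -> FF (fun j => p j + q j) < FF p + FF q.
Proof.
move=> hp hq hP hQ hne.
rewrite F_comb // (FE hP) (FE hQ).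
set P := Ssum p; set Q := Ssum q.
have hPQ : 0 < P + Q by rewrite addr_gt0.
have hl : 0 < P / (P + Q) < 1.
  apply/andP; split; first by rewrite divr_gt0.
  by rewrite ltr_pdivrMr // mul1r ltrDl.
apply: (@lt_le_trans _ _ ((P + Q) * (P / (P + Q) * psi (nrm p) + (1 - P / (P + Q)) * psi (nrm q)))).
  by rewrite ltr_pM2l //; apply: hsc => //; apply: nrm_Omega.
rewrite le_eqVlt; apply/orP; left; apply/eqP.
by field; rewrite gt_eqF.
Qed.

Lemma F_conv_strict (hsc : psi_sc) p q l : nng p -> nng q -> 0 < Ssum p -> 0 < Ssum q ->
  nrm p <> nrm q -> 0 < l < 1 ->
  FF (fun j => l * p j + (1 - l) * q j) < l * FF p + (1 - l) * FF q.
Proof.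
move=> hp hq hP hQ hne /andP [hl0 hl1].
have hl1' : 0 < 1 - l by rewrite subr_gt0.
rewrite -(FZ p (ltW hl0)) -(FZ q (ltW hl1')).
apply: F_sub_strict => //.
- exact: nng_scale (ltW hl0) hp.
- exact: nng_scale (ltW hl1') hq.
- by rewrite SZ mulr_gt0.
- by rewrite SZ mulr_gt0.
- by rewrite !nrmZ.
Qed.

Lemma F_coord_strict (hsc : psi_sc) p q i : nng q -> (forall j, j != i -> p j = q j) ->
  0 <= p i -> p i < q i -> FF p < FF q.
Proof.
move=> hq hpq hp0 hpq'.
set z := fun j => if j == i then 0 else q j.
have hz : nng z by move=> j; rewrite /z; case: ifP.
have hzq : FF z <= FF q := F_B2 i hq.
have qi0 : 0 < q i by apply: le_lt_trans hpq'.
have [hz0|hz0] := boolP (0 < Ssum z); last first.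
  have ez : forall j, j != i -> q j = 0.
    by move=> j h; have := S_eq0 hz hz0 j; rewrite /z (negbTE h).
  have -> : p = fun j => if j == i then p i else 0.
    apply: funext => j; case: (eqVneq j i) => [->|h] //.
    by rewrite hpq // ez.
  have -> : q = fun j => if j == i then q i else 0.
    apply: funext => j; case: (eqVneq j i) => [->|h] //.
    by rewrite ez.
  by rewrite !F_single // ltW.
have hQ : 0 < Ssum q.
  apply: lt_le_trans hz0 _; apply: ler_sum => j _; rewrite /z; case: ifP => // _.
have hne : nrm q <> nrm z.
  move/(congr1 (fun M : 'rV_n => M ord0 i)); rewrite !mxE /z eqxx mul0r.
  by apply/eqP; rewrite gt_eqF // divr_gt0.
have key : forall s, 0 < s < q i -> FF (fun j => if j == i then s else q j) < FF q.
  move=> s /andP [hs0 hs1].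
  set l := s / q i.
  have hl : 0 < l < 1.
    by apply/andP; split; [rewrite divr_gt0 | rewrite ltr_pdivrMr // mul1r].
  have -> : (fun j => if j == i then s else q j) = fun j => l * q j + (1 - l) * z j.
    apply: funext => j; rewrite /z; case: (eqVneq j i) => [->|h].
      by rewrite mulr0 addr0 /l divfK // gt_eqF.
    by rewrite -mulrDl addrC subrK mul1r.
  apply: lt_le_trans; first exact: F_conv_strict.
  rewrite [X in _ <= X](_ : _ = l * FF q + (1 - l) * FF q); last by rewrite -mulrDl addrC subrK mul1r.
  by rewrite lerD2l; apply: ler_wpM2l => //; rewrite subr_ge0 ltW //; case/andP: hl.
have ep : p = fun j => if j == i then p i else q j.
  by apply: funext => j; case: (eqVneq j i) => [->|h] //; apply: hpq.
move: hp0; rewrite le_eqVlt => /orP [/eqP hp0|hp0]; last first.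
  by rewrite ep; apply: key; rewrite hp0 hpq'.
have -> : p = z.
  by rewrite ep /z -hp0; apply: funext => j; case: ifP.
have hm : 0 < q i / 2 < q i.
  by apply/andP; split; [rewrite divr_gt0 | rewrite ltr_pdivrMr // ltr_pMr // ltr1n].
apply: le_lt_trans (key _ hm).
have := @F_B2 (fun j => if j == i then q i / 2 else q j) i.
have -> : (fun j => if j == i then 0 else if j == i then q i / 2 else q j) = z.
  by apply: funext => j; rewrite /z; case: (j == i).
apply.
by move=> j; case: ifP => _ //; rewrite divr_ge0 // ltW.
Qed.

End PsiF.

Lemma normpsiE (R : realType) (X : normedModType R) (n : nat) (psi : 'rV[R]_n -> R)
  (x : 'I_n -> X) : norm_psi psi x = FF psi (fun i => `|x i|).
Proof.
rewrite /norm_psi /FF; case: asboolP => [->|hx].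
  by rewrite /Ssum big1 ?ltxx // => i _; rewrite /vzero normr0.
case: (boolP (0 < Ssum (fun i => `|x i|))) => hS; first by [].
exfalso; apply: hx; apply: funext => i.
have := S_eq0 (a := fun i => `|x i|) (fun i => normr_ge0 (x i)) hS i.
by move/eqP; rewrite normr_eq0 => /eqP.
Qed.

Unset Implicit Arguments.

Theorem theorem2p10 (R : realType) (X : normedModType R) (n : nat)
  (hn : (2 <= n)%N) (psi : 'rV[R]_n -> R) (hpsi : in_Psi psi) :
  [/\ in_N (@norm_psi R X n psi),
      (in_Psi_sc psi -> strictly_convex_normX X -> in_N_sc (@norm_psi R X n psi))
    & (forall (u : 'I_n -> X), (forall i, `|u i| = 1) ->
        forall s : 'rV[R]_n, Omega s ->
          psi s = @norm_psi R X n psi (fun i => s ord0 i *: u i))].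
Proof.
have E := normpsiE (X := X) psi.
have hnng : forall x : 'I_n -> X, nng (fun i => `|x i|) by move=> x i.
have hi : in_N (@norm_psi R X n psi).
  split.
  - split.
    + by move=> x; rewrite E; apply: F_ge0.
    + move=> x; rewrite E => h0; apply: funext => i.
      have := F_ge hpsi i (hnng x); rewrite h0 normr_le0 => /eqP ->; done.
    + move=> a x; rewrite !E /vscale.
      have -> : (fun i => `|a *: x i|) = (fun i => `|a| * `|x i|).
        by apply: funext => i; rewrite normrZ.
      by rewrite FZ.
    + move=> x y; rewrite !E /vadd.
      apply: le_trans; last exact: (F_sub hpsi (hnng x) (hnng y)).
      apply: F_mono => // i; exact: ler_normD.
  - move=> x eps; rewrite !E; congr FF; apply: funext => i.
    by case: (eps i); rewrite ?expr1 ?expr0 ?scaleN1r ?scale1r ?normrN.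
  - move=> i v; rewrite E.
    have -> : (fun j => `|if j == i then v else 0|) = (fun j => if j == i then `|v| else 0).
      by apply: funext => j; case: ifP => _; rewrite ?normr0.
    by rewrite F_single.
split => //.
- move=> [_ hsc] hX; split => // x y hx hy hxy.
  rewrite E /vscale /vadd; rewrite !E in hx hy.
  set a := (fun i => `|x i|) in hx; set b := (fun i => `|y i|) in hy.
  set c := (fun i => `|x i + y i|).
  have -> : (fun i => `|2^-1 *: (x i + y i)|) = (fun i => 2^-1 * c i).
    by apply: funext => i; rewrite normrZ ger0_norm // invr_ge0.
  rewrite FZ ?invr_ge0 //.
  suff : FF psi c < 2.
    by move=> h; rewrite mulrC ltr_pdivrMr // mul1r.
  have hna : nng a by move=> i; rewrite /a.
  have hnb : nng b by move=> i; rewrite /b.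
  have hnc : nng c by move=> i; rewrite /c.
  have hSa : 0 < Ssum a.
    case: (boolP (0 < Ssum a)) => // h.
    by move: hx; rewrite F0 // => /eqP; rewrite eq_sym oner_eq0.
  have hSb : 0 < Ssum b.
    case: (boolP (0 < Ssum b)) => // h.
    by move: hy; rewrite F0 // => /eqP; rewrite eq_sym oner_eq0.
  have two : FF psi a + FF psi b = 2 by rewrite hx hy.
  have hcab : FF psi c <= FF psi (fun j => a j + b j).
    by apply: F_mono => // i; exact: ler_normD.
  have [eab|neab] := pselect (nrm a = nrm b); last first.
    rewrite -two; apply: le_lt_trans hcab _.
    exact: F_sub_strict.
  move: hx hy; rewrite (FE psi hSa) (FE psi hSb) -eab => hx hy.
  have hSab : Ssum a = Ssum b.
    have hp : psi (nrm a) != 0.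
      by apply/eqP => h0; move: hx; rewrite h0 mulr0 => /eqP; rewrite eq_sym oner_eq0.
    by apply: (mulIf hp); rewrite hx hy.
  have eqab : forall j, a j = b j.
    move=> j; have := congr1 (fun M : 'rV_n => M ord0 j) eab; rewrite /= !mxE hSab.
    by move/(mulIf _); apply; rewrite invr_eq0 gt_eqF.
  have [i hi'] : exists i, x i != y i.
    case: (boolP [exists i, x i != y i]) => [/existsP //|/existsPn h].
    exfalso; apply: hxy; apply: funext => i; apply/eqP.
    by have := h i; rewrite negbK.
  set r := a i.
  have hr : 0 < r.
    rewrite lt_def normr_ge0 andbT; apply/negP => /eqP h0.
    move: hi'; have : `|y i| = 0 by rewrite -/(b i) -eqab.
    move/eqP; rewrite normr_eq0 => /eqP ->.
    by move/eqP: h0; rewrite /r /a normr_eq0 => /eqP ->; rewrite eqxx.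
  have hyr : `|y i| = r by rewrite -/(b i) -eqab.
  have hr0 : r != 0 by rewrite gt_eqF.
  have hrinv : 0 <= r^-1 by rewrite invr_ge0 ltW.
  have hX' := hX (r^-1 *: x i) (r^-1 *: y i).
  have hci : c i < 2 * r.
    have h1 : `|r^-1 *: x i| = 1 by rewrite normrZ ger0_norm // mulVf.
    have h2 : `|r^-1 *: y i| = 1 by rewrite normrZ ger0_norm // hyr mulVf.
    have h3 : r^-1 *: x i <> r^-1 *: y i.
      by move/(scalerI (invr_neq0 hr0)) => h; move: hi'; rewrite h eqxx.
    have := hX' h1 h2 h3.
    rewrite -scalerDr scalerA normrZ ger0_norm; last by rewrite mulr_ge0 // invr_ge0.
    move=> hlt.
    have -> : c i = (2 * r) * (2^-1 * r^-1 * c i).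
      by rewrite /c; field; rewrite hr0.
    rewrite -[X in _ < X]mulr1 ltr_pM2l //.
    by rewrite mulr_gt0.
  set d := fun j => if j == i then c i else a j + b j.
  have h1 : FF psi c <= FF psi d.
    apply: F_mono => // j; rewrite /d; case: (eqVneq j i) => [->|h] //.
    rewrite /c /a /b; exact: ler_normD.
  have h2 : FF psi d < FF psi (fun j => a j + b j).
    apply: (F_coord_strict hpsi hsc (i := i)).
    - by move=> j; rewrite addr_ge0.
    - by move=> j /negbTE; rewrite /d => ->.
    - by rewrite /d eqxx.
    - by rewrite /d eqxx -eqab -/r; move: hci; rewrite mulr2n mulrDl mul1r.
  rewrite -two; apply: (le_lt_trans h1 (lt_le_trans h2 _)).
  exact: (F_sub hpsi hna hnb).
- move=> u hu s [hs0 hs1]; rewrite E.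
  have -> : (fun i => `|s ord0 i *: u i|) = (fun i => s ord0 i).
    by apply: funext => i; rewrite normrZ hu mulr1 ger0_norm.
  have hS : Ssum (fun i => s ord0 i) = 1 by [].
  rewrite FE hS ?ltr01 // mul1r; congr psi.
  by apply/rowP => j; rewrite mxE hS divr1.
Qed.
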